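(* Let $S\in\mathbb{R}^{n\times n}$ be real symmetric, $D\in\mathbb{R}^{r\times r}$ diagonal, and $X\in\mathbb{R}^{n\times r}$ satisfy $(S-XX^{T})X=XD$. Then there exists $Y\in\mathbb{R}^{n\times r}$ with $Y^{T}Y$ diagonal such that $(S-YY^{T})Y=YD$, $YY^{T}=XX^{T}$, and $\langle D,Y^{T}Y\rangle=\langle D,X^{T}X\rangle$.
   Context: $\langle A,B\rangle=\mathrm{tr}(A^{T}B)$. *)

(* Defs.v *)
From HB Require Import structures.
From mathcomp Require Import all_boot all_order all_algebra.
From mathcomp Require Import reals.
Set Implicit Arguments. Unset Strict Implicit. Unset Printing Implicit Defensive.
Import GRing.Theory Num.Theory.
Local Open Scope ring_scope.

Definition frob (R : pzRingType) (m n : nat) (A B : 'M[R]_(m, n)) : R :=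
  \tr (A^T *m B).

(* Main.v *)
Require Import Defs.
From HB Require Import structures.
From mathcomp Require Import all_boot all_order all_algebra.
From mathcomp Require Import fingroup perm.
From mathcomp Require Import reals complex.
From mathcomp Require Import ring lra.
Set Implicit Arguments. Unset Strict Implicit. Unset Printing Implicit Defensive.
Import Order.TTheory GRing.Theory Num.Theory.
Local Open Scope ring_scope.
Local Notation cRe := (@complex.Re _).
Local Notation cIm := (@complex.Im _).

Section Eig.
Variable R : rcfType.

Lemma Re_add (x y : R[i]) : cRe (x + y) = cRe x + cRe y.
Proof. by case: x => ? ?; case: y. Qed.
Lemma Im_add (x y : R[i]) : cIm (x + y) = cIm x + cIm y.
Proof. by case: x => ? ?; case: y. Qed.
Lemma Re_mulR (x : R[i]) (y : R) : cRe (x * real_complex R y) = cRe x * y.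
Proof. by case: x => a b /=; rewrite mulr0 subr0. Qed.
Lemma Im_mulR (x : R[i]) (y : R) : cIm (x * real_complex R y) = cIm x * y.
Proof. by case: x => a b /=; rewrite mulr0 add0r. Qed.
Lemma Re_mul (x y : R[i]) : cRe (x * y) = cRe x * cRe y - cIm x * cIm y.
Proof. by case: x => a b; case: y. Qed.
Lemma Im_mul (x y : R[i]) : cIm (x * y) = cRe x * cIm y + cIm x * cRe y.
Proof. by case: x => a b; case: y. Qed.
Lemma Re_sum (I : Type) (r : seq I) (F : I -> R[i]) :
  cRe (\sum_(i <- r) F i) = \sum_(i <- r) cRe (F i).
Proof. by elim/big_rec2: _ => // i y1 y2 _ <-; rewrite Re_add. Qed.
Lemma Im_sum (I : Type) (r : seq I) (F : I -> R[i]) :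
  cIm (\sum_(i <- r) F i) = \sum_(i <- r) cIm (F i).
Proof. by elim/big_rec2: _ => // i y1 y2 _ <-; rewrite Im_add. Qed.

Lemma dot_entry n (u v : 'rV[R]_n) : (u *m v^T) 0 0 = \sum_k u 0 k * v 0 k.
Proof. by rewrite !mxE; apply: eq_bigr => k _; rewrite mxE. Qed.

Lemma real_eig_split n (M : 'M[R]_n) (w : 'rV[R[i]]_n) (l : R[i]) :
  M^T = M -> w != 0 -> w *m map_mx (real_complex R) M = l *: w ->
  [/\ map_mx cRe w *m M = cRe l *: map_mx cRe w,
      map_mx cIm w *m M = cRe l *: map_mx cIm w
    & (map_mx cRe w != 0) || (map_mx cIm w != 0)].
Proof.
move=> MT w0 H.
set wr := map_mx cRe w; set wi := map_mx cIm w.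
have E1 : wr *m M = cRe l *: wr - cIm l *: wi.
  apply/rowP => j; have := congr1 (fun A : 'M[R[i]]_(1,n) => cRe (A 0 j)) H.
  rewrite !mxE Re_sum Re_mul => <-; apply: eq_bigr => k _.
  by rewrite !mxE Re_mulR.
have E2 : wi *m M = cRe l *: wi + cIm l *: wr.
  apply/rowP => j; have := congr1 (fun A : 'M[R[i]]_(1,n) => cIm (A 0 j)) H.
  rewrite !mxE Im_sum Im_mul => <-; apply: eq_bigr => k _.
  by rewrite !mxE Im_mulR.
have trE : forall (A : 'M[R]_1), A 0 0 = A^T 0 0 by move=> A; rewrite mxE.
have T1 : (wr *m M *m wi^T) 0 0 =
   cRe l * (wr *m wi^T) 0 0 - cIm l * (wi *m wi^T) 0 0.
  by rewrite E1 mulmxBl -!scalemxAl !mxE.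
have T2 : (wr *m M *m wi^T) 0 0 =
   cRe l * (wi *m wr^T) 0 0 + cIm l * (wr *m wr^T) 0 0.
  by rewrite trE !trmx_mul trmxK MT mulmxA E2 mulmxDl -!scalemxAl !mxE.
have T3 : (wr *m wi^T) 0 0 = (wi *m wr^T) 0 0.
  by rewrite trE trmx_mul trmxK.
have nz : (wr != 0) || (wi != 0).
  apply: contraT; rewrite negb_or !negbK => /andP[/eqP r0 /eqP i0].
  suff : w == 0 by rewrite (negbTE w0).
  apply/eqP/rowP => j.
  have /rowP/(_ j) := r0; have /rowP/(_ j) := i0; rewrite !mxE.
  by case: (w 0 j) => a b /= -> ->.
have Il : cIm l = 0.
  have : cIm l * ((wi *m wi^T) 0 0 + (wr *m wr^T) 0 0) = 0.
    by move: T1; rewrite T2 T3 => /eqP; rewrite -subr_eq0 => /eqP <-; ring.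
  move/eqP; rewrite mulf_eq0 => /orP[/eqP //|].
  rewrite !dot_entry -big_split /= => /eqP S0.
  suff : ~~ ((wr != 0) || (wi != 0)) by rewrite nz.
  rewrite negb_or !negbK.
  have P0 := psumr_eq0P (fun k _ => addr_ge0 (sqr_ge0 (wi 0 k)) (sqr_ge0 (wr 0 k))) S0.
  apply/andP; split; apply/eqP/rowP => j; have /eqP := P0 j isT;
    rewrite paddr_eq0 ?sqr_ge0 // !sqrf_eq0 /wr /wi !mxE.
  - by case/andP => _ /eqP.
  - by case/andP => /eqP.
split => //.
- by rewrite E1 Il scale0r subr0.
- by rewrite E2 Il scale0r addr0.
Qed.

Lemma common_real_eigvec n (A B : 'M[R]_n) : (0 < n)%N -> A^T = A -> B^T = B ->
  A *m B = B *m A ->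
  exists v : 'rV[R]_n,
    [/\ v != 0, exists a, v *m A = a *: v & exists b, v *m B = b *: v].
Proof.
move=> n0 AT BT AB.
have ABc : map_mx (real_complex R) A *m map_mx (real_complex R) B =
           map_mx (real_complex R) B *m map_mx (real_complex R) A.
  by rewrite -!map_mxM AB.
have [w w0 /andP[sA sB]] := common_eigenvector2 n0 ABc.
have /sub_rVP [la Ha] := sA.
have /sub_rVP [lb Hb] := sB.
have [EA1 EA2 nz] := real_eig_split AT w0 Ha.
have [EB1 EB2 _] := real_eig_split BT w0 Hb.
case/orP: nz => nz; [exists (map_mx cRe w) | exists (map_mx cIm w)];
  split => //; eexists; eassumption.
Qed.

Lemma mx11_tr (A : 'M[R]_1) : A^T = A.
Proof. by rewrite [A]mx11_scalar tr_scalar_mx. Qed.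

Lemma rv_norm0 n (v : 'rV[R]_n) : (v *m v^T) 0 0 = 0 -> v = 0.
Proof.
rewrite dot_entry => S0; apply/rowP => j; rewrite mxE.
have := psumr_eq0P (fun k _ => sqr_ge0 (v 0 k)) S0 (i:=j) isT.
by move/eqP; rewrite mulf_eq0 orbb => /eqP.
Qed.

Lemma householder m (u e : 'rV[R]_m) : u *m u^T = 1%:M -> e *m e^T = 1%:M ->
  exists H : 'M[R]_m, [/\ H^T = H, H *m H = 1%:M & e *m H = u].
Proof.
move=> uu ee.
have [-> | neq] := eqVneq u e.
  by exists 1%:M; split; rewrite ?trmx1 ?mulmx1.
set w := u - e.
set eu := (e *m u^T) 0 0.
have ueT : u *m e^T = eu%:M by rewrite -mx11_scalar -[LHS]mx11_tr trmx_mul trmxK.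
have euT : e *m u^T = eu%:M by rewrite -mx11_scalar.
have wwT : w *m w^T = (2 - 2 * eu)%:M.
  rewrite /w linearB /= mulmxBl !mulmxBr uu ee ueT euT.
  by apply/matrixP => i j; rewrite !ord1 !mxE /=; ring.
have ewT : e *m w^T = (eu - 1)%:M.
  rewrite /w linearB /= mulmxBr ee euT.
  by apply/matrixP => i j; rewrite !ord1 !mxE /=; ring.
set c := 2 - 2 * eu.
have c0 : c != 0.
  apply: contra neq => /eqP c0.
  have /rv_norm0 : (w *m w^T) 0 0 = 0 by rewrite wwT -/c c0 mxE mul0rn.
  by move/eqP; rewrite subr_eq0.
set W := w^T *m w.
have WW : W *m W = c *: W.
  by rewrite /W mulmxA -(mulmxA _ w) wwT mul_mx_scalar -scalemxAl.
exists (1%:M - (2 / c) *: W); split.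
- by rewrite linearB /= trmx1 linearZ /= /W trmx_mul trmxK.
- rewrite mulmxBl !mulmxBr !mulmx1 mul1mx -!scalemxAl -!scalemxAr WW !scalerA.
  apply/matrixP => i j; rewrite !mxE; field.
  by rewrite -/c.
- rewrite mulmxBr mulmx1 -scalemxAr /W mulmxA ewT mul_scalar_mx scalerA.
  have -> : 2 / c * (eu - 1) = -1.
    rewrite /c; field.
    by move: c0; rewrite /c.
  by rewrite scaleN1r opprK /w addrC subrK.
Qed.

Lemma bd_mul n (a b : R) (P Q : 'M[R]_n) :
  block_mx a%:M 0 0 P *m block_mx b%:M 0 0 Q =
  block_mx (a * b)%:M 0 0 (P *m Q) :> 'M_(1 + n).
Proof. by rewrite mulmx_block !mulmx0 !mul0mx !addr0 !add0r scalar_mxM. Qed.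

Lemma bd_tr n (a : R) (P : 'M[R]_n) :
  (block_mx a%:M 0 0 P)^T = block_mx a%:M 0 0 P^T :> 'M_(1 + n).
Proof. by rewrite tr_block_mx tr_scalar_mx !trmx0. Qed.

Lemma row0_block n (K : 'M[R]_(1 + n)) (a : R) :
  K^T = K -> row 0 K = a *: delta_mx 0 0 ->
  K = block_mx a%:M 0 0 (drsubmx K).
Proof.
move=> KT rK.
have K0 : forall j, K 0 j = a * (j == 0)%:R.
  by move=> j; have := congr1 (fun M : 'rV[R]_(1+n) => M 0 j) rK; rewrite !mxE eqxx /=.
rewrite -{1}[K]submxK; congr block_mx.
- apply/matrixP => i j; rewrite !ord1 !mxE.
  have -> : lshift n (0 : 'I_1) = 0 by apply/val_inj.
  by rewrite K0 !eqxx mulr1.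
- apply/matrixP => i j; rewrite !ord1 !mxE.
  have -> : lshift n (0 : 'I_1) = 0 by apply/val_inj.
  by rewrite K0 (_ : (rshift 1 j == 0 :> 'I_(1 + n)) = false) ?mulr0.
- apply/matrixP => i j; rewrite !ord1 !mxE -KT mxE.
  have -> : lshift n (0 : 'I_1) = 0 by apply/val_inj.
  by rewrite K0 (_ : (rshift 1 i == 0 :> 'I_(1 + n)) = false) ?mulr0.
Qed.

Lemma simdiag n (A B : 'M[R]_n) : A^T = A -> B^T = B -> A *m B = B *m A ->
  exists Q : 'M[R]_n, [/\ Q^T *m Q = 1%:M, is_diag_mx (Q^T *m A *m Q)
                        & is_diag_mx (Q^T *m B *m Q)].
Proof.
elim: n A B => [|n IH] A B AT BT AB.
  by exists 1%:M; split; [rewrite trmx1 mulmx1 | apply/is_diag_mxP => -[] | apply/is_diag_mxP => -[]].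
have [v [v0 [a Ha] [b Hb]]] := common_real_eigvec (ltn0Sn n) AT BT AB.
set s := (v *m v^T) 0 0.
have s0 : 0 < s.
  rewrite lt0r; apply/andP; split.
    by apply: contra v0 => /eqP /rv_norm0 ->.
  by rewrite /s dot_entry sumr_ge0 // => k _; rewrite -expr2 sqr_ge0.
set u := (Num.sqrt s)^-1 *: v.
have uu : u *m u^T = 1%:M.
  rewrite /u linearZ /= -scalemxAl -scalemxAr scalerA [v *m v^T]mx11_scalar -/s.
  rewrite scale_scalar_mx -invfM -expr2 sqr_sqrtr; last exact: ltW s0.
  by congr (_%:M); apply: mulVf; rewrite lt0r_neq0.
have uA : u *m A = a *: u by rewrite /u -scalemxAl Ha !scalerA mulrC.
have uB : u *m B = b *: u by rewrite /u -scalemxAl Hb !scalerA mulrC.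
set e : 'rV[R]_(1 + n) := delta_mx 0 0.
have ee : e *m e^T = 1%:M.
  by rewrite /e trmx_delta mul_delta_mx; apply/matrixP => i j; rewrite !ord1 !mxE.
have [H [HT HH eH]] := householder uu ee.
set K : 'M[R]_(1 + n) := H *m A *m H.
set L : 'M[R]_(1 + n) := H *m B *m H.
have KT : K^T = K by rewrite /K !trmx_mul HT AT mulmxA.
have LT : L^T = L by rewrite /L !trmx_mul HT BT mulmxA.
have rK : row 0 K = a *: e.
  by rewrite rowE /K -/e !mulmxA eH uA -scalemxAl -eH -mulmxA HH mulmx1.
have rL : row 0 L = b *: e.
  by rewrite rowE /L -/e !mulmxA eH uB -scalemxAl -eH -mulmxA HH mulmx1.
have Kb := row0_block KT rK.
have Lb := row0_block LT rL.
set K' := drsubmx K in Kb; set L' := drsubmx L in Lb.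
have K'T : K'^T = K' by rewrite /K' trmx_drsub KT.
have L'T : L'^T = L' by rewrite /L' trmx_drsub LT.
have KL : K *m L = L *m K.
  rewrite /K /L !mulmxA -(mulmxA _ H H) HH mulmx1 -(mulmxA _ A B) AB.
  by rewrite -(mulmxA _ H H) HH mulmx1 !mulmxA.
have K'L' : K' *m L' = L' *m K'.
  have := congr1 drsubmx KL; rewrite Kb Lb !bd_mul !block_mxKdr.
  by [].
have [Q' [QQ' dA' dB']] := IH K' L' K'T L'T K'L'.
pose Bq : 'M[R]_(1 + n) := block_mx 1%:M 0 0 Q'.
exists (H *m Bq); rewrite /Bq; split.
- rewrite trmx_mul bd_tr HT mulmxA -(mulmxA _ H H) HH mulmx1 bd_mul QQ' mulr1.
  by rewrite -scalar_mx_block.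
- rewrite trmx_mul bd_tr HT !mulmxA -(mulmxA _ H A) -(mulmxA _ (H *m A) H).
  rewrite -/K Kb !bd_mul mul1r mulr1.
  by rewrite (@is_diag_block_mx _ 1 n 1 n) // !eqxx dA' scalar_mx_is_diag.
- rewrite trmx_mul bd_tr HT !mulmxA -(mulmxA _ H B) -(mulmxA _ (H *m B) H).
  rewrite -/L Lb !bd_mul mul1r mulr1.
  by rewrite (@is_diag_block_mx _ 1 n 1 n) // !eqxx dB' scalar_mx_is_diag.
Qed.

Lemma perm_conj n (t : 'S_n) (A : 'M[R]_n) :
  (perm_mx t)^T *m A *m perm_mx t = \matrix_(i, j) A ((t^-1)%g i) ((t^-1)%g j).
Proof.
rewrite tr_perm_mx -row_permE.
have -> : perm_mx t = perm_mx ((t^-1)^-1)%g by rewrite invgK.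
rewrite -col_permE.
by apply/matrixP => i j; rewrite !mxE.
Qed.

Lemma perm_orth n (t : 'S_n) : perm_mx t *m (perm_mx t)^T = 1%:M :> 'M[R]_n.
Proof. by rewrite tr_perm_mx -(@perm_mxM R) mulgV perm_mx1. Qed.

End Eig.

Theorem lemma22 (R : realType) (n r : nat)
  (S : 'M[R]_n) (D : 'M[R]_r) (X : 'M[R]_(n, r)) :
  S^T = S -> is_diag_mx D ->
  (S - X *m X^T) *m X = X *m D ->
  exists Y : 'M[R]_(n, r),
    [/\ is_diag_mx (Y^T *m Y),
        (S - Y *m Y^T) *m Y = Y *m D,
        Y *m Y^T = X *m X^T
      & frob D (Y^T *m Y) = frob D (X^T *m X)].
Proof.
move=> ST Ddiag HX.
set M := S - X *m X^T in HX *.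
have MT : M^T = M by rewrite /M linearB /= trmx_mul trmxK ST.
set G := X^T *m X.
have GT : G^T = G by rewrite /G trmx_mul trmxK.
have [d Dd] := diag_mxP _ Ddiag.
have DT : D^T = D by rewrite Dd tr_diag_mx.
have GD : G *m D = D *m G.
  have E1 : X^T *m M *m X = G *m D by rewrite -mulmxA HX mulmxA.
  have : (X^T *m M *m X)^T = X^T *m M *m X
    by rewrite !trmx_mul trmxK MT mulmxA.
  by rewrite E1 trmx_mul GT DT => ->.
have [Q [QQ dG dD]] := simdiag GT DT GD.
have QQt : Q *m Q^T = 1%:M by apply: mulmx1C.
have [f Ef] := diag_mxP _ dD.
have DQ : D *m Q = Q *m diag_mx f.
  by rewrite -Ef !mulmxA QQt mul1mx.
have detQ : \det Q != 0.
  apply/eqP => Q0; have := congr1 determinant QQ.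
  by rewrite det_mulmx det_tr Q0 mul0r det1 => /eqP; rewrite eq_sym oner_eq0.
have [s Hs] : exists s : 'S_r, \prod_i Q i (s i) != 0.
  case: (pickP (fun s : 'S_r => \prod_i Q i (s i) != 0)) => [s Hs | H0].
    by exists s.
  move/eqP: detQ; case; rewrite /determinant big1 // => s _.
  by have := H0 s => /negbFE /eqP ->; rewrite mulr0.
have ds : forall i, d 0 i = f 0 (s i).
  move=> i; have /prodf_neq0 /(_ i isT) Qi := Hs.
  have := congr1 (fun A : 'M[R]_r => A i (s i)) DQ.
  rewrite Dd mul_diag_mx mul_mx_diag !mxE [Q i (s i) * _]mulrC => /eqP.
  by rewrite -subr_eq0 -mulrBl mulf_eq0 (negbTE Qi) orbF subr_eq0 => /eqP.
set W := Q *m perm_mx (s^-1)%g.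
have WW : W *m W^T = 1%:M.
  by rewrite /W trmx_mul mulmxA -(mulmxA Q) perm_orth mulmx1 QQt.
have WDW : W^T *m D *m W = D.
  rewrite /W trmx_mul -!mulmxA (mulmxA Q^T) (mulmxA (Q^T *m D)) Ef !mulmxA.
  rewrite perm_conj Dd; apply/matrixP => i j; rewrite !mxE invgK.
  have [->|nij] := eqVneq i j; first by rewrite eqxx ds.
  by rewrite (inj_eq perm_inj) (negbTE nij).
have WDWt : W *m D *m W^T = D.
  by rewrite -{1}WDW !mulmxA WW mul1mx -(mulmxA D Q) -/W -mulmxA WW mulmx1.
exists (X *m W); split.
- have -> : (X *m W)^T *m (X *m W) = (perm_mx (s^-1)%g)^T *m (Q^T *m G *m Q) *m perm_mx (s^-1)%g
    by rewrite /W /G !trmx_mul !mulmxA.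
  rewrite perm_conj.
  apply/is_diag_mxP => i j nij; rewrite mxE.
  move/is_diag_mxP: dG; apply; rewrite invgK.
  by rewrite (inj_eq (@ord_inj _)) (inj_eq perm_inj) -(inj_eq (@ord_inj _)).
- have YY : X *m W *m (X *m W)^T = X *m X^T.
    by rewrite trmx_mul mulmxA -(mulmxA X) WW mulmx1.
  clearbody W; by rewrite YY -/M mulmxA HX -[in RHS]WDW !mulmxA -(mulmxA X W) WW mulmx1.
- by rewrite trmx_mul mulmxA -(mulmxA X) WW mulmx1.
- clearbody W; rewrite /frob DT.
  have -> : D *m ((X *m W)^T *m (X *m W)) = (D *m W^T *m G) *m W.
    by rewrite /G trmx_mul !mulmxA.
  by rewrite mxtrace_mulC !mulmxA WDWt.
Qed.
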